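(* Let $S$ be a semigroup with apartness and $A\subset S$ a co-ideal. Define $\kappa_A$ on $S$ by $x\kappa_A y\Leftrightarrow (x\#y)\wedge(x\in A\vee y\in A)$, and let $\rho_{\neg A}=\{(x,y)\mid x=y\vee(x\in\neg A\wedge y\in\neg A)\}$ where $\neg A=\{x\mid x\notin A\}$. Then: (1) $\neg A=\tilde A$ and this is an ideal of $S$; (2) $\kappa_A$ is a co-congruence on $S$; (3) $\rho_{\neg A}\subset\neg\kappa_A$. Consequently $(S/\rho_{\neg A},\kappa_A)$ is a semigroup with apartness.
   Context: Constructive (intuitionistic) mathematics. A semigroup with apartness is a semigroup with an apartness relation $\#$ (irreflexive, symmetric, cotransitive: $x\#z\Rightarrow(x\#y\vee y\#z)$) such that $xy\#zw\Rightarrow(x\#z\vee y\#w)$. A subset $A$ is strongly extensional if $a\in A\Rightarrow(x\in A\vee x\#a)$; it is a co-ideal if strongly extensional and convex, i.e. $ab\in A\Rightarrow(a\in A\wedge b\in A)$. $\tilde A=\{x\mid\forall_{a\in A}x\#a\}$. A co-congruence is a relation $\kappa$ with $\kappa\subset\#$, symmetric, cotransitive, and with $(ax)\kappa(by)\Rightarrow(a\kappa b\vee x\kappa y)$. $S/\rho$ denotes $S$ with equality $\rho$. *)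

(* Defs.v *)
Set Implicit Arguments.

Section Defs.
Variable T : Type.

(* A semigroup with apartness, for an arbitrary equality relation [eq]
   (so that "S/rho", i.e. S with equality rho, can be expressed). *)
Record IsSemigroupApart (eq ap : T -> T -> Prop) (mul : T -> T -> T) : Prop := {
  sa_eq_refl  : forall x, eq x x;
  sa_eq_sym   : forall x y, eq x y -> eq y x;
  sa_eq_trans : forall x y z, eq x y -> eq y z -> eq x z;
  sa_mul_ext  : forall x y x' y', eq x x' -> eq y y' -> eq (mul x y) (mul x' y');
  sa_assoc    : forall x y z, eq (mul (mul x y) z) (mul x (mul y z));
  sa_irrefl   : forall x y, eq x y -> ~ ap x y;
  sa_sym      : forall x y, ap x y -> ap y x;
  sa_cotrans  : forall x y z, ap x z -> ap x y \/ ap y z;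
  sa_strext   : forall x y z w, ap (mul x y) (mul z w) -> ap x z \/ ap y w
}.

Variable ap : T -> T -> Prop.
Variable mul : T -> T -> T.

Definition strongly_extensional (A : T -> Prop) : Prop :=
  forall a x, A a -> A x \/ ap x a.

Definition convex (A : T -> Prop) : Prop :=
  forall a b, A (mul a b) -> A a /\ A b.

Definition co_ideal (A : T -> Prop) : Prop :=
  strongly_extensional A /\ convex A.

Definition ideal (I : T -> Prop) : Prop :=
  forall x y, I x -> I (mul x y) /\ I (mul y x).

Definition compl (A : T -> Prop) : T -> Prop := fun x => ~ A x.

Definition tilde (A : T -> Prop) : T -> Prop := fun x => forall a, A a -> ap x a.

Definition co_congruence (k : T -> T -> Prop) : Prop :=
  (forall x y, k x y -> ap x y) /\
  (forall x y, k x y -> k y x) /\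
  (forall x y z, k x z -> k x y \/ k y z) /\
  (forall a x b y, k (mul a x) (mul b y) -> k a b \/ k x y).

Definition kappa (A : T -> Prop) : T -> T -> Prop :=
  fun x y => ap x y /\ (A x \/ A y).

Definition rho_compl (A : T -> Prop) : T -> T -> Prop :=
  fun x y => x = y \/ (compl A x /\ compl A y).

End Defs.

(* Main.v *)
Require Import Defs.

Theorem mainTheorem12 (T : Type) (ap : T -> T -> Prop) (mul : T -> T -> T)
  (HS : IsSemigroupApart (@eq T) ap mul)
  (A : T -> Prop) (HA : co_ideal ap mul A) :
  ((forall x, compl A x <-> tilde ap A x) /\ ideal mul (compl A)) /\
  co_congruence ap mul (kappa ap A) /\
  (forall x y, rho_compl A x y -> ~ kappa ap A x y) /\
  IsSemigroupApart (rho_compl A) (kappa ap A) mul.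
Proof.
  destruct HS as [_ _ _ _ Hassoc Hirr Hsym Hcot Hstr].
  destruct HA as [Hse Hcv].
  unfold compl, tilde, kappa, rho_compl in *.
  assert (Hid : forall x y, ~ A x -> ~ A (mul x y) /\ ~ A (mul y x)).
  { intros x y Hx; split; intro H; apply Hx; apply (Hcv _ _ H). }
  assert (Hcc : co_congruence ap mul (kappa ap A)).
  { unfold kappa; split; [|split; [|split]].
    - intros x y [H _]; exact H.
    - intros x y [H1 H2]; split; [apply Hsym; exact H1| tauto].
    - intros x y z [Hxz Ho].
      destruct (Hcot x y z Hxz) as [Hxy|Hyz].
      + destruct Ho as [Ax|Az]; [left; tauto|].
        destruct (Hse z y Az) as [Ay|Hyz']; [left; tauto| right; tauto].
      + destruct Ho as [Ax|Az]; [|right; tauto].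
        destruct (Hse x y Ax) as [Ay|Hyx]; [right; tauto|].
        left; split; [apply Hsym; exact Hyx| tauto].
    - intros a x b y [H Ho].
      destruct (Hstr a x b y H) as [H1|H1].
      + left; split; [exact H1|].
        destruct Ho as [Ho|Ho]; destruct (Hcv _ _ Ho); tauto.
      + right; split; [exact H1|].
        destruct Ho as [Ho|Ho]; destruct (Hcv _ _ Ho); tauto. }
  assert (Hrk : forall x y, (x = y \/ (~ A x /\ ~ A y)) -> ~ kappa ap A x y).
  { unfold kappa; intros x y [->|[Hx Hy]] [Hk Ho].
    - exact (Hirr y y eq_refl Hk).
    - tauto. }
  destruct Hcc as [Hc1 [Hc2 [Hc3 Hc4]]].
  split; [split|split; [|split]].
  - intro x; split.
    + intros Hx a Ha. destruct (Hse a x Ha) as [H|H]; [contradiction|exact H].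
    + intros H Ax. exact (Hirr x x eq_refl (H x Ax)).
  - unfold ideal; intros x y Hx; exact (Hid x y Hx).
  - split; [exact Hc1|split; [exact Hc2|split; [exact Hc3|exact Hc4]]].
  - exact Hrk.
  - constructor.
    + intros; left; reflexivity.
    + intros x y [->|[H1 H2]]; [left; reflexivity| right; tauto].
    + intros x y z [->|[H1 H2]] [->|[H3 H4]]; try (left; reflexivity); right; tauto.
    + intros x y x' y' [->|[H1 H2]] [->|[H3 H4]].
      * left; reflexivity.
      * right; split; [apply (Hid _ _ H3)|apply (Hid _ _ H4)].
      * right; split; [apply (Hid _ _ H1)|apply (Hid _ _ H2)].
      * right; split; [apply (Hid _ _ H1)|apply (Hid _ _ H2)].
    + intros; left; apply Hassoc.
    + exact Hrk.
    + exact Hc2.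
    + exact Hc3.
    + exact Hc4.
Qed.
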